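(* Let $A$ be a general metric space, let $(x_n)$ and $(y_n)$ be weakly flat sequences in $A$ and let $\mathcal F$ be a flat filter on $A$ with $(x_n)\to\mathcal F$ and $(y_n)\to\mathcal F$. Then there exists a forward Cauchy sequence $(z_n)$ in $A$ such that $(x_n)\to(z_n)$, $(y_n)\to(z_n)$ and $(z_n)\to\mathcal F$.
   Context: A general metric space $A$ is a set with $A(-,-):A\times A\to[0,\infty]$, $A(x,x)=0$, $A(x,z)\le A(x,y)+A(y,z)$. A filter on $A$ is a nonempty set of nonempty subsets closed under finite intersections and supersets. $\mathcal F$ is weakly flat iff for every $\epsilon>0$ there is $f\in\mathcal F$ such that for all $x\in f$ and all $g\in\mathcal F$ there is $y\in g$ with $A(x,y)\le\epsilon$; flat iff for every $\epsilon>0$ there is $f\in\mathcal F$ such that for every finite family $x_1,\dots,x_n\in f$ and every $g\in\mathcal F$ there is $y\in g$ with $A(x_i,y)\le\epsilon$ for all $i$. For weakly flat filters, $\mathcal F_1\to\mathcal F_2$ iff for every $\epsilon>0$ there is $f\in\mathcal F_1$ such that for every $x\in f$ and every $g\in\mathcal F_2$ there is $y\in g$ with $A(x,y)\le\epsilon$. A sequence is identified with its filter, generated by the tails $\{x_p:p\ge n\}$; a sequence is weakly flat if its filter is. $(z_n)$ is forward Cauchy iff for every $\epsilon>0$ there is $N$ with $A(z_n,z_m)\le\epsilon$ whenever $m\ge n\ge N$. *)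

(* Defs.v *)
From Stdlib Require Import Reals.
From Coquelicot Require Import Coquelicot.
Open Scope R_scope.

Record GenMetric (X : Type) (d : X -> X -> Rbar) : Prop := {
  gm_nonneg : forall x y, Rbar_le (Finite 0) (d x y);
  gm_refl : forall x, d x x = Finite 0;
  gm_triangle : forall x y z, Rbar_le (d x z) (Rbar_plus (d x y) (d y z))
}.

Record IsFilter (X : Type) (F : (X -> Prop) -> Prop) : Prop := {
  fil_nonempty : exists f, F f;
  fil_members_nonempty : forall f, F f -> exists x, f x;
  fil_inter : forall f g, F f -> F g -> F (fun x => f x /\ g x);
  fil_super : forall f g : X -> Prop, F f -> (forall x, f x -> g x) -> F g
}.

Definition dle {X} (d : X -> X -> Rbar) x y (eps : R) := Rbar_le (d x y) (Finite eps).

Definition weakly_flat {X} (d : X -> X -> Rbar) (F : (X -> Prop) -> Prop) : Prop :=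
  forall eps, 0 < eps -> exists f, F f /\
    forall x, f x -> forall g, F g -> exists y, g y /\ dle d x y eps.

Definition flat {X} (d : X -> X -> Rbar) (F : (X -> Prop) -> Prop) : Prop :=
  forall eps, 0 < eps -> exists f, F f /\
    forall xs : list X, (forall x, List.In x xs -> f x) ->
    forall g, F g -> exists y, g y /\ forall x, List.In x xs -> dle d x y eps.

Definition fconv {X} (d : X -> X -> Rbar) (F1 F2 : (X -> Prop) -> Prop) : Prop :=
  forall eps, 0 < eps -> exists f, F1 f /\
    forall x, f x -> forall g, F2 g -> exists y, g y /\ dle d x y eps.

Definition seq_filter {X} (x : nat -> X) : (X -> Prop) -> Prop :=
  fun f => exists n, forall p, (n <= p)%nat -> f (x p).

Definition forward_cauchy {X} (d : X -> X -> Rbar) (z : nat -> X) : Prop :=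
  forall eps, 0 < eps -> exists N, forall n m, (N <= n)%nat -> (n <= m)%nat ->
    dle d (z n) (z m) eps.

(* Main.v *)
Require Import Defs.
From Stdlib Require Import Reals.
From Coquelicot Require Import Coquelicot.
From Stdlib Require Import ClassicalEpsilon List Lra Lia.
Open Scope R_scope.

Definition ep (k : nat) : R := (/2) ^ k.

Lemma ep_pos k : 0 < ep k.
Proof. unfold ep. apply pow_lt. lra. Qed.

Lemma ep_S k : ep (S k) = / 2 * ep k.
Proof. reflexivity. Qed.

Lemma ep_anti k n : (k <= n)%nat -> ep n <= ep k.
Proof.
  induction 1. lra. rewrite ep_S. pose proof (ep_pos m). lra.
Qed.

Lemma ep_small e : 0 < e -> exists k, ep k <= e.
Proof.
  intros He. destruct (pow_lt_1_zero (/2)) with (y := e) as [N HN].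
  rewrite Rabs_pos_eq; lra. exact He.
  exists N. specialize (HN N (le_n N)). rewrite Rabs_pos_eq in HN.
  unfold ep; lra. apply pow_le; lra.
Qed.

Lemma dle_mono {X} (d : X -> X -> Rbar) a b e1 e2 :
  dle d a b e1 -> e1 <= e2 -> dle d a b e2.
Proof.
  unfold dle. intros H1 H2. eapply Rbar_le_trans. exact H1. simpl. exact H2.
Qed.

Lemma dle_tr {X} (d : X -> X -> Rbar) (HA : GenMetric X d) a b c e1 e2 :
  dle d a b e1 -> dle d b c e2 -> dle d a c (e1 + e2).
Proof.
  unfold dle. intros H1 H2.
  eapply Rbar_le_trans. apply (gm_triangle _ _ HA a b c).
  pose proof (gm_nonneg _ _ HA a b) as N1. pose proof (gm_nonneg _ _ HA b c) as N2.
  destruct (d a b); destruct (d b c); simpl in *; try contradiction; lra.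
Qed.

Theorem mainTheorem14 (X : Type) (d : X -> X -> Rbar) (HA : GenMetric X d)
  (x y : nat -> X) (F : (X -> Prop) -> Prop) (HF : IsFilter X F)
  (Hx : weakly_flat d (seq_filter x)) (Hy : weakly_flat d (seq_filter y))
  (HFf : flat d F)
  (HxF : fconv d (seq_filter x) F) (HyF : fconv d (seq_filter y) F) :
  exists z : nat -> X, forward_cauchy d z /\
    fconv d (seq_filter x) (seq_filter z) /\
    fconv d (seq_filter y) (seq_filter z) /\
    fconv d (seq_filter z) F.
Proof.
  pose (fs k := proj1_sig (constructive_indefinite_description _ (HFf (ep k) (ep_pos k)))).
  assert (Hfs : forall k, F (fs k) /\ forall xs : list X, (forall a, In a xs -> fs k a) ->
    forall g, F g -> exists b, g b /\ forall a, In a xs -> dle d a b (ep k)).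
  { intro k. exact (proj2_sig (constructive_indefinite_description _ (HFf (ep k) (ep_pos k)))). }
  clearbody fs.
  assert (inh : inhabited X) by exact (inhabits (x 0%nat)).
  pose (cw (u : nat -> X) p k m := epsilon inh (fun w => fs m w /\
     ((exists w', fs m w' /\ dle d (u p) w' (ep k)) -> dle d (u p) w (ep k)))).
  assert (Hcw : forall u p k m, fs m (cw u p k m) /\
     ((exists w', fs m w' /\ dle d (u p) w' (ep k)) -> dle d (u p) (cw u p k m) (ep k))).
  { intros u p k m. unfold cw. apply epsilon_spec.
    destruct (classic (exists w', fs m w' /\ dle d (u p) w' (ep k))) as [[w' Hw']|Hn].
    - exists w'. tauto.
    - destruct (fil_members_nonempty _ _ HF (fs m) (proj1 (Hfs m))) as [w Hw].
      exists w. tauto. }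
  clearbody cw.
  pose (idx m := list_prod (seq 0 (S m)) (seq 0 (S m))).
  pose (Lst m := map (fun pk => cw x (fst pk) (snd pk) m) (idx m)
              ++ map (fun pk => cw y (fst pk) (snd pk) m) (idx m)).
  assert (HLst : forall m a, In a (Lst m) -> fs m a).
  { intros m a Ha. unfold Lst in Ha. apply in_app_or in Ha.
    destruct Ha as [Ha|Ha]; apply in_map_iff in Ha; destruct Ha as [pk [<- _]];
    apply Hcw. }
  assert (HinL : forall (u : nat -> X) m p k, (u = x \/ u = y) -> (p <= m)%nat -> (k <= m)%nat ->
     In (cw u p k m) (Lst m)).
  { intros u m p k Hu Hp Hk. unfold Lst. apply in_or_app.
    assert (Hi : In (p, k) (idx m)) by (apply in_prod; apply in_seq; lia).
    destruct Hu as [->| ->]; [left|right]; apply in_map_iff; exists (p, k); auto. }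
  pose (P m (L : list X) w := fs (S m) w /\ forall a, In a L -> dle d a w (ep m)).
  pose (z := fix z (m : nat) : X := match m with
     | O => epsilon inh (P O (Lst O))
     | S m' => epsilon inh (P m (z m' :: Lst m)) end).
  assert (Hz : forall m, P m ((match m with O => nil | S m' => z m' :: nil end) ++ Lst m) (z m)).
  { induction m as [|m IH].
    - simpl. apply epsilon_spec. apply (proj2 (Hfs 0%nat)). apply HLst.
      apply (proj1 (Hfs 1%nat)).
    - simpl. apply epsilon_spec. apply (proj2 (Hfs (S m))).
      + intros a [<-|Ha]. apply IH. apply HLst, Ha.
      + apply (proj1 (Hfs (S (S m)))). }
  clearbody z.
  assert (Hzf : forall m, fs (S m) (z m)) by (intro m; apply (Hz m)).
  assert (Hstep : forall m, dle d (z m) (z (S m)) (ep (S m))).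
  { intro m. apply (proj2 (Hz (S m))). simpl. auto. }
  assert (HzL : forall m a, In a (Lst m) -> dle d a (z m) (ep m)).
  { intros m a Ha. apply (proj2 (Hz m)). apply in_or_app. right. exact Ha. }
  assert (Hcau : forall n j, dle d (z n) (z (n + j)%nat) (ep n - ep (n + j))).
  { intros n j. induction j as [|j IH].
    - rewrite Nat.add_0_r. unfold dle. rewrite (gm_refl _ _ HA). simpl. lra.
    - replace (ep n - ep (n + S j)) with ((ep n - ep (n + j)) + ep (S (n + j))).
      + rewrite Nat.add_succ_r. eapply dle_tr; eauto.
      + rewrite Nat.add_succ_r, ep_S. lra. }
  assert (Hconv : forall u, (u = x \/ u = y) -> fconv d (seq_filter u) F ->
            fconv d (seq_filter u) (seq_filter z)).
  { intros u Hu HuF e He.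
    destruct (ep_small (e / 2)) as [k Hk]. lra.
    destruct (HuF (ep k) (ep_pos k)) as [f0 [[N HN] Hf0]].
    exists (fun a => exists p, (N <= p)%nat /\ a = u p). split.
    - exists N. intros p Hp. eauto.
    - intros a [p [Hp ->]] g [M HM].
      pose (m := (M + p + k)%nat).
      exists (z m). split. apply HM. unfold m; lia.
      destruct (Hf0 (u p) (HN p Hp) (fs m) (proj1 (Hfs m))) as [w' Hw'].
      pose proof (proj2 (Hcw u p k m) (ex_intro _ w' Hw')) as H1.
      assert (H2 : dle d (cw u p k m) (z m) (ep m)).
      { apply HzL. apply HinL; auto; unfold m; lia. }
      eapply dle_mono. eapply dle_tr; eauto.
      pose proof (ep_anti k m ltac:(unfold m; lia)). lra. }
  exists z. split; [|split; [|split]].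
  - intros e He. destruct (ep_small e He) as [N HN]. exists N.
    intros n m Hn Hm. replace m with (n + (m - n))%nat by lia.
    eapply dle_mono. apply Hcau.
    pose proof (ep_pos (n + (m - n))). pose proof (ep_anti N n Hn). lra.
  - apply Hconv; auto.
  - apply Hconv; auto.
  - intros e He. destruct (ep_small e He) as [k Hk].
    exists (fun a => exists n, (k <= n)%nat /\ a = z n). split.
    + exists k. intros p Hp. eauto.
    + intros a [n [Hn ->]] g Hg.
      destruct (proj2 (Hfs (S n)) (z n :: nil)) with (g := g) as [b [Hb Hb2]].
      * intros a [<-|[]]. apply Hzf.
      * exact Hg.
      * exists b. split. exact Hb. eapply dle_mono. apply Hb2. left; reflexivity.
        pose proof (ep_anti k (S n) ltac:(lia)). lra.
Qed.
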